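(* For $p\in(0,1]$ define on $(0,1)$ $$w(x)=x^{p}+p(p-1)x-(p^{2}+2p-2)-p(p+1)x^{1-p}+(p-1)^{2}x^{-p}.$$ Then: (i) if $p\in(0,2/3]$, $w(x)>0$ for all $x\in(0,1)$; (ii) if $p\in(2/3,1)$, there is a unique $x_1\in(0,1)$ such that $w>0$ on $(0,x_1)$ and $w<0$ on $(x_1,1)$; (iii) if $p=1$, $w(x)<0$ for all $x\in(0,1)$. *)

(* Defs.v *)
(* real powers via Rpower (defined for x > 0). *)
From Stdlib Require Import Reals.
Open Scope R_scope.

Definition w (p x : R) : R :=
  Rpower x p + p * (p - 1) * x - (p ^ 2 + 2 * p - 2)
  - p * (p + 1) * Rpower x (1 - p) + (p - 1) ^ 2 * Rpower x (- p).

(* Main.v *)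
Require Import Defs.
From Stdlib Require Import Reals Lra Psatz.
From Coquelicot Require Import Coquelicot.
Open Scope R_scope.

Definition m (p x : R) := Rpower x (p-1) + (p-1) - (1-p^2)*Rpower x (-p) - (1-p)^2*Rpower x (-p-1).
Definition dm (p x : R) := (p-1)*Rpower x (p-2) + p*(1-p^2)*Rpower x (-p-1) + (p+1)*(1-p)^2*Rpower x (-p-2).

Lemma exp_le a b : a <= b -> exp a <= exp b.
Proof. intros [H|H]. apply Rlt_le, exp_increasing; auto. subst; lra. Qed.

Lemma pows x p : 0 < x ->
  exp ((p-1)*ln x) = exp (p*ln x) / x /\ exp (-p*ln x) = / exp (p*ln x) /\
  exp ((1-p)*ln x) = x / exp (p*ln x) /\ exp ((-p-1)*ln x) = / (exp (p*ln x) * x) /\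
  exp ((p-2)*ln x) = exp (p*ln x) / (x*x) /\ exp ((-p-2)*ln x) = / (exp (p*ln x)*x*x) /\
  exp ((2*p)*ln x) = exp (p*ln x) * exp (p*ln x).
Proof.
  intro hx. pose proof (exp_pos (p*ln x)) as hu.
  repeat split.
  - (replace ((p-1)*ln x) with (p*ln x + - ln x) by ring); rewrite exp_plus, exp_Ropp, exp_ln; [field|]; lra.
  - (replace (-p*ln x) with (- (p*ln x)) by ring); rewrite exp_Ropp; auto.
  - (replace ((1-p)*ln x) with (ln x + - (p*ln x)) by ring); rewrite exp_plus, exp_Ropp, exp_ln; [field|]; lra.
  - (replace ((-p-1)*ln x) with (- (p*ln x) + - ln x) by ring); rewrite !exp_plus, !exp_Ropp, exp_ln; [field|]; lra.
  - (replace ((p-2)*ln x) with (p*ln x + - ln x + - ln x) by ring); rewrite !exp_plus, !exp_Ropp, exp_ln; [field|]; lra.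
  - (replace ((-p-2)*ln x) with (- (p*ln x) + - ln x + - ln x) by ring); rewrite !exp_plus, !exp_Ropp, exp_ln; [field|]; lra.
  - (replace ((2*p)*ln x) with (p*ln x + p*ln x) by ring); rewrite exp_plus; auto.
Qed.

Ltac normp x p hx :=
  let u := fresh "u" in let hu := fresh "hu" in
  destruct (pows x p hx) as (E1 & E2 & E3 & E4 & E5 & E6 & E7);
  pose proof (exp_pos (p*ln x)) as hu;
  rewrite ?E1, ?E2, ?E3, ?E4, ?E5, ?E6, ?E7; clear E1 E2 E3 E4 E5 E6 E7;
  set (u := exp (p*ln x)) in *.

Lemma dw p x : 0 < x -> is_derive (w p) x (p * m p x).
Proof. intro hx. unfold w, m, Rpower. auto_derive. lra.
  normp x p hx. field. split; lra. Qed.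

Lemma dm_d p x : 0 < x -> is_derive (m p) x (dm p x).
Proof. intro hx. unfold dm, m, Rpower. auto_derive. lra.
  normp x p hx. field. split; lra. Qed.

Lemma rp1 a : Rpower 1 a = 1.
Proof. unfold Rpower. rewrite ln_1, Rmult_0_r, exp_0. auto. Qed.

Lemma m1 p : m p 1 = 3*p - 2.
Proof. unfold m. rewrite !rp1. ring. Qed.

Lemma w1 p : w p 1 = 4 - 6*p.
Proof. unfold w. rewrite !rp1. ring. Qed.

Lemma Qpos p x : 0 < p < 1 -> 0 < x < 1 ->
  exp (p*ln x) * exp (p*ln x) < p*(1+p)*x + 1 - p^2.
Proof.
  intros hp hx.
  assert (hL : ln x < 0) by (rewrite <- ln_1; apply ln_increasing; lra).
  assert (hln : 1 + ln x <= x).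
  { destruct (Req_dec (ln x) 0) as [e|e]. rewrite e; lra.
    pose proof (exp_ineq1 _ e). rewrite exp_ln in H; lra. }
  rewrite <- exp_plus.
  destruct (Rle_lt_dec (1/2) p) as [h|h].
  - assert (exp (p*ln x + p*ln x) <= x).
    { apply Rle_trans with (exp (ln x)); [apply exp_le; nra | rewrite exp_ln; lra]. }
    assert (0 < p*(1+p)) by nra. nra.
  - set (v := exp (p*ln x + p*ln x)).
    assert (hv : v * exp (-(p*ln x + p*ln x)) = 1).
    { unfold v. rewrite <- exp_plus. replace (_ + _) with 0 by ring. apply exp_0. }
    assert (hv2 : 1 + (-(p*ln x + p*ln x)) < exp (-(p*ln x + p*ln x))).
    { apply exp_ineq1. nra. }
    assert (0 < v) by apply exp_pos.
    set (e := exp (-(p*ln x + p*ln x))) in *.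
    assert (e >= 1 + 2*p*(1-x)) by nra.
    assert ((1 + 2*p*(1-x)) * (p*(1+p)*x + 1 - p^2) > 1).
    { replace ((1 + 2*p*(1-x)) * (p*(1+p)*x + 1 - p^2)) with
        (1 + p * (1 + (1+p)*(1-x)*(1 - 2*p*(1-x)))) by ring.
      assert (0 < 1 - 2*p*(1-x)) by nra.
      assert (0 < (1+p)*(1-x)) by nra.
      assert (0 < (1+p)*(1-x)*(1 - 2*p*(1-x))) by (apply Rmult_lt_0_compat; lra).
      nra. }
    assert (0 < p*(1+p)*x + 1 - p^2) by nra.
    assert (hB : 0 < 1 + 2*p*(1-x)) by nra.
    assert (v * (1 + 2*p*(1-x)) <= 1) by nra.
    apply Rmult_lt_reg_r with (1 + 2*p*(1-x)); auto. nra.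
Qed.

Lemma dm_pos p x : 0 < p < 1 -> 0 < x < 1 -> dm p x > 0.
Proof.
  intros hp hx. pose proof (Qpos p x hp hx) as Q.
  unfold dm, Rpower. assert (hx0 : 0 < x) by lra. normp x p hx0.
  replace ((p - 1) * (u / (x * x)) + p * (1 - p ^ 2) * / (u * x) + (p + 1) * (1 - p) ^ 2 * / (u * x * x))
    with ((1-p) / (u*x*x) * (p*(1+p)*x + 1 - p^2 - u*u)) by (field; lra).
  apply Rmult_lt_0_compat. apply Rdiv_lt_0_compat; [lra| ]. 
  apply Rmult_lt_0_compat; nra. lra.
Qed.

Lemma m_incr p a b : 0 < p < 1 -> 0 < a -> a < b -> b <= 1 -> m p a < m p b.
Proof.
  intros hp ha hab hb.
  destruct (MVT_cor2 (m p) (dm p) a b hab) as [c [hc1 hc2]].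
  { intros c hc. apply is_derive_Reals. apply dm_d. lra. }
  assert (dm p c > 0) by (apply dm_pos; lra). nra.
Qed.

Lemma w_mvt p a b : 0 < a -> a < b -> exists c, a < c < b /\ w p b - w p a = p * m p c * (b - a).
Proof.
  intros ha hab.
  destruct (MVT_cor2 (w p) (fun x => p * m p x) a b hab) as [c [hc1 hc2]].
  { intros c hc. apply is_derive_Reals. apply dw. lra. }
  exists c. split; auto.
Qed.

Lemma part1 p : 0 < p <= 2/3 -> forall x, 0 < x < 1 -> w p x > 0.
Proof.
  intros hp x hx.
  destruct (w_mvt p x 1) as [c [hc e]]; try lra.
  assert (m p c < m p 1) by (apply m_incr; lra).
  rewrite m1 in H. rewrite w1 in e.
  assert (hq : p * (1-x) > 0) by nra.
  assert (p * m p c * (1 - x) = m p c * (p*(1-x))) by ring.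
  assert (m p c * (p*(1-x)) < 0) by (apply Rmult_neg_pos; lra || nra). nra.
Qed.

Lemma keyL p a b : 2/3 < p < 1 -> 0 < a -> a < b -> b <= 1 -> w p a <= 0 -> w p b < 0.
Proof.
  intros hp ha hab hb hwa.
  destruct (Rlt_or_le (w p b) 0) as [h|h]; auto. exfalso.
  destruct (w_mvt p a b) as [c [hc e]]; try lra.
  assert (hmc : m p c >= 0).
  { destruct (Rlt_or_le (m p c) 0) as [h'|h']; [|lra].
    assert (m p c * (p*(b-a)) < 0) by (apply Rmult_neg_pos; nra).
    assert (p * m p c * (b - a) = m p c * (p*(b-a))) by ring. lra. }
  pose proof (w1 p) as h1.
  destruct hb as [hb|hb].
  - destruct (w_mvt p b 1) as [d [hd e2]]; try lra.
    assert (m p c < m p d) by (apply m_incr; lra).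
    assert (m p d * (p*(1-b)) > 0) by (apply Rmult_gt_0_compat; nra).
    assert (p * m p d * (1 - b) = m p d * (p*(1-b))) by ring. lra.
  - subst b. lra.
Qed.

Lemma w_cont p x : 0 < x -> continuity_pt (fun t => - w p t) x.
Proof.
  intro hx. apply (continuity_pt_opp (w p)).
  apply derivable_continuous_pt. exists (p * m p x).
  apply is_derive_Reals. apply dw; auto.
Qed.

Lemma x0_ex p : 2/3 < p < 1 -> exists x0, 0 < x0 < 1 /\ w p x0 > 0.
Proof.
  intros hp. set (q := (1-p)^2/3).
  assert (hq : 0 < q < 1) by (unfold q; split; nra).
  assert (hlq : ln q < 0) by (rewrite <- ln_1; apply ln_increasing; lra).
  set (L0 := ln q / p - 1).
  assert (hL0 : L0 < 0) by (unfold L0; assert (ln q / p < 0) by (apply Rdiv_neg_pos; lra); lra).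
  exists (exp L0).
  assert (hx : 0 < exp L0 < 1) by (split; [apply exp_pos| rewrite <- exp_0; apply exp_increasing; lra]).
  split; auto.
  unfold w, Rpower. assert (hx0 : 0 < exp L0) by lra.
  rewrite ln_exp.
  assert (hu : exp (p * L0) = q * exp (-p)).
  { unfold L0. replace (p * (ln q / p - 1)) with (ln q + - p) by (field; lra).
    rewrite exp_plus, exp_ln; auto; lra. }
  assert (he : exp (-p) < 1) by (rewrite <- exp_0; apply exp_increasing; lra).
  pose proof (exp_pos (-p)).
  assert (hu1 : exp (p*L0) < 1) by (apply Rlt_le_trans with (exp 0); [apply exp_increasing; nra | rewrite exp_0; lra]).
  assert (hu2 : exp ((1-p)*L0) < 1) by (apply Rlt_le_trans with (exp 0); [apply exp_increasing; nra | rewrite exp_0; lra]).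
  assert (hu3 : exp (-p*L0) * exp (p*L0) = 1) by (rewrite <- exp_plus; (replace (_ + _) with 0 by ring); apply exp_0).
  assert (hu4 : exp (-p*L0) > 3/(1-p)^2).
  { rewrite hu in hu3. unfold q in hu3.
    pose proof (exp_pos (-p*L0)). 
    assert (exp (-p * L0) * ((1 - p) ^ 2 / 3) > 1) by nra.
    apply Rmult_gt_reg_r with ((1-p)^2/3). nra.
    replace (3 / (1 - p) ^ 2 * ((1 - p) ^ 2 / 3)) with 1 by (field; lra). lra. }
  assert (hu5 : (1-p)^2 * exp (-p*L0) > 3).
  { assert ((1-p)^2 * (3/(1-p)^2) = 3) by (field; lra).
    assert ((1-p)^2*(3/(1-p)^2) < (1-p)^2*exp(-p*L0)) by (apply Rmult_lt_compat_l; nra). lra. }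
  pose proof (exp_pos (p*L0)). pose proof (exp_pos ((1-p)*L0)).
  assert (A1 : 0 < (p*(1-p))*(1 - exp L0)) by (apply Rmult_lt_0_compat; nra).
  assert (A2 : 0 < (p*(1+p))*(1 - exp ((1-p)*L0))) by (apply Rmult_lt_0_compat; nra).
  assert (A3 : exp (- p * L0) = / exp (p * L0)).
  { apply Rmult_eq_reg_r with (exp (p*L0)). rewrite hu3. field. lra. lra. }
  assert (A4 : 2 - 4*p - p^2 > -3) by nra.
  assert (A5 : p ^ 2 + 2 * p - 2 = p^2 + 2*p - 2) by ring.
  replace ((p - 1) ^ 2) with ((1-p)^2) by ring.
  set (e1 := exp L0) in *. set (e2 := exp ((1-p)*L0)) in *. set (e3 := exp (-p*L0)) in *.
  set (e4 := exp (p*L0)) in *.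
  assert (E1 : p * (1 - p) * (1 - e1) = p*(1-p) - p*(1-p)*e1) by ring.
  assert (E2 : p * (1 + p) * (1 - e2) = p*(1+p) - p*(1+p)*e2) by ring.
  nra.
Qed.

Theorem mainTheorem8 :
  (forall p : R, 0 < p <= 2 / 3 ->
     forall x : R, 0 < x < 1 -> w p x > 0) /\
  (forall p : R, 2 / 3 < p < 1 ->
     exists! x1 : R, 0 < x1 < 1 /\
       (forall x : R, 0 < x < x1 -> w p x > 0) /\
       (forall x : R, x1 < x < 1 -> w p x < 0)) /\
  (forall x : R, 0 < x < 1 -> w 1 x < 0).
Proof.
  split; [exact part1|split].
  - intros p hp.
    destruct (x0_ex p hp) as [x0 [hx0 hw0]].
    pose proof (w1 p) as h1.
    destruct (Ranalysis5.IVT_interv (fun t => - w p t) x0 1) as [z [hz ez]].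
    { intros a ha. apply w_cont. lra. }
    lra. lra. lra.
    assert (hz0 : w p z = 0) by lra.
    assert (z <> x0) by (intro; subst; lra).
    assert (z <> 1) by (intro; subst; lra).
    assert (hP : 0 < z < 1 /\ (forall x, 0 < x < z -> w p x > 0) /\ (forall x, z < x < 1 -> w p x < 0)).
    { split; [lra|split].
      - intros x hx. destruct (Rlt_or_le 0 (w p x)) as [h|h]; auto.
        pose proof (keyL p x z hp ltac:(lra) ltac:(lra) ltac:(lra) h). lra.
      - intros x hx. apply (keyL p z x hp); lra. }
    exists z. split; auto.
    intros y [hy [hy1 hy2]]. destruct hP as [_ [hz1 hz2]].
    destruct (Rtotal_order y z) as [h|[h|h]]; auto; exfalso.
    + pose proof (hy2 ((y+z)/2) ltac:(lra)). pose proof (hz1 ((y+z)/2) ltac:(lra)). lra.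
    + pose proof (hz2 ((y+z)/2) ltac:(lra)). pose proof (hy1 ((y+z)/2) ltac:(lra)). lra.
  - intros x hx. unfold w.
    replace (1 - 1) with 0 by ring. replace (-(1)) with (- 1) by ring.
    rewrite Rpower_1, Rpower_O by lra.
    assert (0 < Rpower x (-1)) by apply exp_pos. lra.
Qed.
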